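(* Let $G=(V,E)$ be a connected simple undirected graph with $V=\{1,\dots,n\}$, let $c\in\mathbb{R}^n$ be a vector with all components strictly positive, and let $\rho>0$. Then there exist strictly positive edge weights $w_{ij}>0$, $\{i,j\}\in E$, such that the weighted adjacency matrix $A$ satisfies $Ac=\rho\,c$ (i.e. $c$ is an eigenvector centrality vector of $G$ for some positive weighting) if and only if $$\sum_{j\in S}c_j^2=\sum_{j\in N(S)}c_j^2\quad\text{for every } S\in\mathcal{S}_1,$$ and $$\sum_{j\in S}c_j^2<\sum_{j\in N(S)}c_j^2\quad\text{for every } S\in\mathcal{S}_2.$$
   Context: For positive edge weights $w_{ij}=w_{ji}$ ($\{i,j\}\in E$), the weighted adjacency matrix $A\in\mathbb{R}^{n\times n}$ has $a_{ij}=w_{ij}$ if $\{i,j\}\in E$ and $a_{ij}=0$ otherwise. For $S\subseteq V$, the external neighborhood is $N(S)=\{j\in V\setminus S:\ \exists\, i\in S \text{ with } \{i,j\}\in E\}$. A set $S\subseteq V$ is stable if no two elements of $S$ are joined by an edge. $\mathcal{S}_1$ is the family of nonempty stable sets $S\subseteq V$ such that there is no edge $\{k,\ell\}\in E$ with $k\notin S$ and $\ell\notin S$; $\mathcal{S}_2$ is the family of nonempty stable sets $S\subseteq V$ such that there exists an edge $\{k,\ell\}\in E$ with $k\notin S$ and $\ell\notin S$. *)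

(* Defs.v *)
From HB Require Import structures.
From mathcomp Require Import all_boot all_order all_algebra.
From mathcomp Require Import reals.
Set Implicit Arguments. Unset Strict Implicit. Unset Printing Implicit Defensive.
Import Order.TTheory GRing.Theory Num.Theory.
Local Open Scope ring_scope.

Definition simple_graph (n : nat) (e : rel 'I_n) : Prop :=
  symmetric e /\ irreflexive e.

Definition connected_graph (n : nat) (e : rel 'I_n) : Prop :=
  forall i j : 'I_n, connect e i j.

Definition wadj (R : ringType) (n : nat) (e : rel 'I_n) (w : 'I_n -> 'I_n -> R)
  : 'M[R]_n := \matrix_(i, j) (if e i j then w i j else 0).

Definition ext_nbhd (n : nat) (e : rel 'I_n) (S : {set 'I_n}) : {set 'I_n} :=
  [set j | (j \notin S) && [exists i in S, e i j]].

Definition stable_set (n : nat) (e : rel 'I_n) (S : {set 'I_n}) : bool :=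
  [forall i in S, forall j in S, ~~ e i j].

Definition edge_outside (n : nat) (e : rel 'I_n) (S : {set 'I_n}) : bool :=
  [exists k, exists l, [&& e k l, k \notin S & l \notin S]].

Definition family_S1 (n : nat) (e : rel 'I_n) (S : {set 'I_n}) : bool :=
  [&& S != set0, stable_set e S & ~~ edge_outside e S].

Definition family_S2 (n : nat) (e : rel 'I_n) (S : {set 'I_n}) : bool :=
  [&& S != set0, stable_set e S & edge_outside e S].

(* Main.v *)
Require Import Defs.
From HB Require Import structures.
From mathcomp Require Import all_boot all_order all_algebra.
From mathcomp Require Import reals.
From mathcomp Require Import zify ring lra.
Set Implicit Arguments. Unset Strict Implicit. Unset Printing Implicit Defensive.
Import Order.TTheory GRing.Theory Num.Theory.
Local Open Scope ring_scope.

Lemma exists_min (R : realDomainType) (T : finType) (P : pred T) (f : T -> R) x0 :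
  P x0 -> exists x, P x /\ forall y, P y -> f x <= f y.
Proof.
move=> Px0.
have := @extremumP R T (fun x y => x <= y) x0 P f (@lexx _ _) (@le_trans _ _) (@le_total _ _) Px0.
case=> i Pi H; by exists i.
Qed.

Lemma pos_lb (R : realDomainType) (T : finType) (P : pred T) (f : T -> R) :
  (forall x, P x -> 0 < f x) -> exists m, 0 < m /\ forall x, P x -> m <= f x.
Proof.
move=> Hf; case: (pickP P) => [x0 Px0|nP].
  have [x [Px Hx]] := exists_min f Px0.
  by exists (f x); split => //; apply: Hf.
by exists 1; split => // x; rewrite nP.
Qed.

Lemma sum_delta (R : ringType) (T : finType) (X : {set T}) (u : T) (t : R) :
  \sum_(i in X) (if i == u then t else 0) = if u \in X then t else 0.
Proof.
case: ifP => uX.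
  rewrite (bigD1 u) //= eqxx big1 ?addr0 // => i /andP[_ /negbTE ->] //.
by rewrite big1 // => i iX; case: eqP => // iu; rewrite -iu iX in uX.
Qed.

Lemma sum_delta_full (R : ringType) (T : finType) (u : T) (t : R) :
  \sum_i (if i == u then t else 0) = t.
Proof.
by rewrite (bigD1 u) //= eqxx big1 ?addr0 // => i /negbTE ->.
Qed.

Lemma le_sum_term (R : numDomainType) (T : finType) (P : pred T) (F : T -> R) i0 :
  (forall i, P i -> 0 <= F i) -> P i0 -> F i0 <= \sum_(i | P i) F i.
Proof.
move=> H P0; rewrite (bigD1 i0) //= lerDl; apply: sumr_ge0 => i /andP[Pi _]; exact: H.
Qed.

Definition Nb (T : finType) (e : rel T) (X : {set T}) : {set T} :=
  [set j | [exists i in X, e i j]].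
Definition hallc (R : numDomainType) (T : finType) (e : rel T) (L : {set T}) (a d : T -> R) :=
  forall X : {set T}, X \subset L -> \sum_(i in X) a i <= \sum_(j in Nb e X) d j.
Definition feas (R : numDomainType) (T : finType) (e : rel T) (L : {set T}) (a d : T -> R) :=
  exists z : T -> T -> R, (forall i j, 0 <= z i j) /\
   (forall i j, z i j != 0 -> (i \in L) && e i j) /\
   (forall i, i \in L -> \sum_j z i j = a i) /\ (forall j, \sum_i z i j <= d j).
Definition meas (R : numDomainType) (T : finType) (L : {set T}) (d : T -> R) :=
  (#|L| + #|[set j | (0 < d j)%R]|)%N.
Definition nonneg (R : numDomainType) (T : finType) (a : T -> R) := forall i, 0 <= a i.

Lemma NbU (T : finType) (e : rel T) X Y j :
  (j \in Nb e (X :|: Y)) = (j \in Nb e X) || (j \in Nb e Y).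
Proof.
rewrite !inE; apply/existsP/orP => [[i /andP[]]|].
  by rewrite inE => /orP[iX|iY] eij; [left|right]; apply/existsP; exists i; rewrite ?iX ?iY eij.
by case=> /existsP[i /andP[iX eij]]; exists i; rewrite inE iX ?orbT eij.
Qed.

Lemma caseA (R : realDomainType) (T : finType) (e : rel T) m
 (IH : forall L (a d : T -> R), (meas L d <= m)%N -> nonneg a -> nonneg d ->
        hallc e L a d -> feas e L a d)
 L (a d : T -> R) (X : {set T}) : (meas L d <= m.+1)%N -> nonneg a -> nonneg d -> hallc e L a d ->
 X \subset L -> X != set0 -> X != L ->
 \sum_(i in X) a i = \sum_(j in Nb e X) d j -> feas e L a d.
Proof.
move=> Hm Ha Hd Hh XL X0 XL' Xt.
have cXL : (#|X| < #|L|)%N by apply: proper_card; rewrite properEneq XL' XL.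
have cX0 : (0 < #|X|)%N by rewrite card_gt0.
have [z1 [z1p [z1s [z1r z1c]]]] : feas e X a d.
  apply: IH => //; first (move: Hm; rewrite /meas=> H; set k := #|[set j | _]| in H *; lia).
  by move=> Y YX; apply: Hh; exact: subset_trans YX XL.
pose d2 := fun j => if j \in Nb e X then 0 else d j.
have [z2 [z2p [z2s [z2r z2c]]]] : feas e (L :\: X) a d2.
  apply: IH => //.
  - rewrite /meas; have -> : #|L :\: X| = (#|L| - #|X|)%N by rewrite cardsD (setIidPr XL).
    have : (#|[set j | (0 < d2 j)%R]| <= #|[set j | (0 < d j)%R]|)%N.
      apply: subset_leq_card; apply/subsetP => j; rewrite !inE /d2.
      by case: ifP => //; rewrite ltxx.
    move: Hm cXL cX0; rewrite /meas.
    set k2 := #|[set j | (0 < d2 j)%R]|; set k := #|[set j | (0 < d j)%R]|; lia.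
  - by move=> j; rewrite /d2; case: ifP.
  - move=> Y YLX.
    have YL : Y \subset L := subset_trans YLX (subsetDl L X).
    have HXY := Hh (X :|: Y) (ltac:(by rewrite subUset XL YL)).
    have C1 : \sum_(i in X :|: Y) a i = \sum_(i in X) a i + \sum_(i in Y) a i.
      rewrite !(big_mkcond (fun i => i \in _)) -big_split /=; apply: eq_bigr => i _.
      rewrite inE; case iX: (i \in X); case iY: (i \in Y) => //=; rewrite ?addr0 ?add0r //.
      by move/subsetP: YLX => /(_ i iY); rewrite inE iX.
    have C2 : \sum_(j in Nb e (X :|: Y)) d j <= \sum_(j in Nb e X) d j + \sum_(j in Nb e Y) d2 j.
      rewrite !(big_mkcond (fun i => i \in _)) -big_split /=; apply: ler_sum => j _.
      rewrite NbU /d2; case: (j \in Nb e X); case: (j \in Nb e Y) => //=;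
        rewrite ?addr0 ?add0r ?lerDl //.
    lra.
exists (fun i j => z1 i j + z2 i j); split; [|split; [|split]].
- by move=> i j; apply: addr_ge0.
- move=> i j; have [->|/z1s/andP[iX ->]] := eqVneq (z1 i j) 0.
    by rewrite add0r => /z2s; rewrite inE => /andP[/andP[_ ->] ->].
  by rewrite (subsetP XL).
- move=> i iL; rewrite big_split /=.
  case iX: (i \in X).
    rewrite z1r // big1 ?addr0 // => j _; apply/eqP; apply/negPn/negP => /z2s.
    by rewrite inE iX.
  rewrite z2r ?inE ?iX ?iL // big1 ?add0r // => j _; apply/eqP; apply/negPn/negP => /z1s.
  by rewrite iX.
- move=> j; rewrite big_split /=.
  case jX: (j \in Nb e X).
    by have := z2c j; rewrite /d2 jX => H; rewrite -[d j]addr0 lerD.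
  rewrite big1 ?add0r; first by have := z2c j; rewrite /d2 jX.
  move=> i _; apply/eqP; apply/negPn/negP => /z1s /andP[iX eij].
  by move: jX; rewrite inE; move/negbT/existsPn => /(_ i); rewrite iX eij.
Qed.

Lemma sum_sub_delta (R : ringType) (T : finType) (X : {set T}) (a : T -> R) u t :
  \sum_(i in X) (a i - (if i == u then t else 0)) =
  \sum_(i in X) a i - (if u \in X then t else 0).
Proof. by rewrite sumrB sum_delta. Qed.

Lemma reduce (R : realDomainType) (T : finType) (e : rel T) (L : {set T}) (a d : T -> R) u v t :
  u \in L -> e u v -> 0 <= t ->
  feas e L (fun i => a i - (if i == u then t else 0))
           (fun j => d j - (if j == v then t else 0)) -> feas e L a d.
Proof.
move=> uL euv t0 [z [zp [zs [zr zc]]]].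
exists (fun i j => z i j + (if (i == u) && (j == v) then t else 0)).
split; [|split; [|split]].
- by move=> i j; apply: addr_ge0 => //; case: ifP.
- move=> i j; case: ifP => [/andP[/eqP -> /eqP ->]|_]; first by rewrite uL euv.
  by rewrite addr0 => /zs.
- move=> i iL; rewrite big_split /= zr //.
  case: (eqVneq i u) => [->|iu] /=.
    by rewrite sum_delta_full subrK.
  by rewrite big1 ?subr0 ?addr0.
- move=> j; rewrite big_split /=.
  have := zc j; case: (eqVneq j v) => [->|jv] /=.
    have -> : \sum_i (if (i == u) && true then t else 0) = t.
      by rewrite -[RHS](sum_delta_full u t); apply: eq_bigr => i _; rewrite andbT.
    by rewrite -lerBrDr.
  have -> : \sum_i (if (i == u) && false then t else 0) = 0.
    by apply: big1 => i _; rewrite andbF.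
  by rewrite subr0 addr0.
Qed.

Lemma hall_red (R : realDomainType) (T : finType) (e : rel T) (L : {set T}) (a d : T -> R) u v t :
  hallc e L a d -> e u v ->
  (forall X : {set T}, X \subset L -> u \notin X -> v \in Nb e X ->
      t <= \sum_(j in Nb e X) d j - \sum_(i in X) a i) ->
  hallc e L (fun i => a i - (if i == u then t else 0))
            (fun j => d j - (if j == v then t else 0)).
Proof.
move=> Hh euv Ht X XL; rewrite !sum_sub_delta.
have H := Hh X XL.
case uX: (u \in X).
  have -> : v \in Nb e X by rewrite inE; apply/existsP; exists u; rewrite uX euv.
  by rewrite lerD2r.
case vN: (v \in Nb e X).
  by have := Ht X XL (negbT uX) vN; rewrite subr0; lra.
by rewrite !subr0.
Qed.

Lemma feas_ext (R : realDomainType) (T : finType) (e : rel T) (L L' : {set T}) (a d : T -> R) :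
  feas e L' a d -> L' \subset L -> (forall i, i \in L -> i \notin L' -> a i = 0) ->
  feas e L a d.
Proof.
move=> [z [zp [zs [zr zc]]]] LL Ha; exists z; split; [|split; [|split]] => //.
- by move=> i j /zs /andP[iL ->]; rewrite (subsetP LL).
- move=> i iL; case iL': (i \in L'); first exact: zr.
  rewrite Ha ?iL' // big1 // => j _; apply/eqP; apply/negPn/negP => /zs.
  by rewrite iL'.
Qed.

Lemma ar_a (x k1 k2 m : nat) : (1 + x + k2 <= m.+1 -> k1 <= k2 -> x + k1 <= m)%N.
Proof. lia. Qed.
Lemma ar_b (x k1 k2 m : nat) : (x + k2 <= m.+1 -> k1 <= k2 -> x + k1 <= m.+1)%N.
Proof. lia. Qed.
Lemma ar_c (x k1 k2 m : nat) : (x + k2 <= m.+1 -> k1 < k2 -> x + k1 <= m)%N.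
Proof. lia. Qed.

Lemma hall_main (R : realDomainType) (T : finType) (e : rel T) m :
  forall (L : {set T}) (a d : T -> R), (meas L d <= m)%N -> nonneg a -> nonneg d ->
  hallc e L a d -> feas e L a d.
Proof.
have zero_case : forall (L : {set T}) (a d : T -> R), nonneg d ->
    (forall i, i \in L -> a i = 0) -> feas e L a d.
  move=> L a d Hd Ha; exists (fun _ _ => 0); split; [|split; [|split]] => //.
  - by move=> i j; rewrite eqxx.
  - by move=> i iL; rewrite big1 // Ha.
  - by move=> j; rewrite big1.
elim: m => [|m IH] L a d Hm Ha Hd Hh.
  apply: zero_case => // i iL; exfalso.
  have : (0 < #|L|)%N by apply/card_gt0P; exists i.
  by move: Hm; rewrite /meas; case: #|L| => //.
case: (boolP [exists X : {set T}, [&& X \subset L, X != set0, X != L &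
           \sum_(i in X) a i == \sum_(j in Nb e X) d j]]).
  move=> /existsP[X /and4P[XL X0 XL' /eqP Xt]].
  exact: (caseA IH Hm Ha Hd Hh XL X0 XL' Xt).
move=> /existsPn ntight'.
have ntight : forall X : {set T}, X \subset L -> X != set0 -> X != L ->
    \sum_(i in X) a i < \sum_(j in Nb e X) d j.
  move=> X XL X0 XL'; rewrite lt_neqAle Hh // andbT.
  by have := ntight' X; rewrite XL X0 XL'.
case: (pickP (fun i => (i \in L) && (a i != 0))) => [u /andP[uL au0] | none]; last first.
  apply: zero_case => // i iL; have := none i; rewrite iL /=.
  by move/negbFE/eqP.
have aup : 0 < a u by rewrite lt_def au0 Ha.
case: (pickP (fun j => (j \in Nb e [set u]) && (0 < d j))) => [v /andP[vN dvp] | nv].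
  2: { exfalso; have := Hh [set u]; rewrite sub1set uL big_set1 => /(_ isT).
       rewrite big1; first by rewrite leNgt aup.
       move=> j jN; have := nv j; rewrite jN /= lt_def Hd andbT => /negbFE/eqP //. }
have euv : e u v.
  by move: vN; rewrite inE => /existsP[i /andP[]]; rewrite inE => /eqP ->.
pose P := fun X : {set T} => [&& X \subset L, u \notin X & v \in Nb e X].
pose slack := fun X : {set T} => \sum_(j in Nb e X) d j - \sum_(i in X) a i.
have slack_pos : forall X, P X -> 0 < slack X.
  move=> X /and3P[XL uX vX]; rewrite subr_gt0; apply: ntight => //.
  - apply/set0Pn; move: vX; rewrite inE => /existsP[i /andP[iX _]]; by exists i.
  - by apply/eqP => XLe; rewrite XLe uL in uX.
have [mu [mup [muP muE]]] : exists mu, 0 < mu /\ (forall X, P X -> mu <= slack X) /\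
    (mu = a u \/ exists2 X, P X & mu = slack X).
  case: (pickP P) => [X0 PX0 | noP].
    have [X [PX HX]] := exists_min slack PX0.
    by exists (slack X); split; [exact: slack_pos|split => //; right; exists X].
  by exists (a u); split => //; split => [X|]; [rewrite noP|left].
pose a' := fun t i => a i - (if i == u then t else 0).
pose d' := fun t j => d j - (if j == v then t else 0).
have key : forall t, 0 < t -> t <= a u -> t <= d v -> t <= mu ->
    feas e L (a' t) (d' t) -> feas e L a d.
  by move=> t t0 _ _ _; apply: reduce uL euv (ltW t0).
have common : forall t, 0 < t -> t <= a u -> t <= d v -> t <= mu ->
   [/\ nonneg (a' t), nonneg (d' t), hallc e L (a' t) (d' t) &
       [set j | (0 < d' t j)%R] \subset [set j | (0 < d j)%R]].
  move=> t t0 tau tdv tmu; split.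
  - by move=> i; rewrite /a'; case: eqP => [->|]; rewrite ?subr_ge0 ?subr0.
  - by move=> j; rewrite /d'; case: eqP => [->|]; rewrite ?subr_ge0 ?subr0.
  - apply: hall_red => // X XL uX vX; apply: le_trans tmu _; apply: muP.
    by rewrite /P XL uX vX.
  - apply/subsetP => j; rewrite !inE /d'; case: eqP => [_ H|_]; last by rewrite subr0.
    by apply: lt_le_trans H _; rewrite lerBlDr lerDl ltW.
have case_au : forall t, 0 < t -> t <= a u -> t <= d v -> t <= mu -> t = a u ->
    feas e L a d.
  move=> t0 Ht0 tau tdv tmu ta; apply: (key t0) => //.
  have [Ha' Hd' Hh' Hsub] := common t0 Ht0 tau tdv tmu.
  apply: (@feas_ext _ _ _ _ (L :\ u)).
  - apply: IH => //.
    + move: Hm; rewrite /meas (cardsD1 u L) uL => Hm.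
      exact: (ar_a Hm (subset_leq_card Hsub)).
    + by move=> X XL; apply: Hh'; apply: subset_trans XL (subD1set L u).
  - exact: subD1set.
  - move=> i iL; rewrite !inE iL andbT negbK /a' => /eqP ->.
    by rewrite eqxx ta subrr.
have [h1|h1] := leP (a u) (d v).
  have [h2|h2] := leP (a u) mu.
    by apply: (case_au (a u)).
  case: muE => [mua|[X PX muX]].
    by rewrite mua ltxx in h2.
  apply: (key mu) => //; [exact: ltW|exact: (le_trans (ltW h2))|].
  have mud : mu <= d v by apply: le_trans (ltW h2) h1.
  have [Ha' Hd' Hh' Hsub] := common mu mup (ltW h2) mud (lexx mu).
  move: PX => /and3P[XL uX vX].
  apply: (caseA IH _ Ha' Hd' Hh' XL).
  - move: Hm; rewrite /meas => Hm; exact: (ar_b Hm (subset_leq_card Hsub)).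
  - apply/set0Pn; move: vX; rewrite inE => /existsP[i /andP[iX _]]; by exists i.
  - by apply/eqP => XLe; rewrite XLe uL in uX.
  - rewrite /a' /d' !sum_sub_delta (negbTE uX) vX muX /slack; lra.
have [h2|h2] := leP (d v) mu.
  have dva : d v <= a u := ltW h1.
  apply: (key (d v)) => //.
  have [Ha' Hd' Hh' Hsub] := common (d v) dvp dva (lexx _) h2.
  apply: IH => //.
  have : [set j | (0 < d' (d v) j)%R] \proper [set j | (0 < d j)%R].
    apply/properP; split => //; exists v; rewrite !inE ?dvp //.
    by rewrite /d' eqxx subrr ltxx.
  move/proper_card; move: Hm; rewrite /meas => Hm Hp; exact: (ar_c Hm Hp).
(* t = mu < d v < a u *)
case: muE => [mua|[X PX muX]].
  by move: h1 h2; rewrite mua => h1 h2; have := lt_trans h2 h1; rewrite ltxx.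
have mua : mu <= a u by apply: ltW; apply: lt_trans h2 h1.
apply: (key mu) => //; [exact: ltW|].
have [Ha' Hd' Hh' Hsub] := common mu mup mua (ltW h2) (lexx mu).
move: PX => /and3P[XL uX vX].
apply: (caseA IH _ Ha' Hd' Hh' XL).
- move: Hm; rewrite /meas => Hm; exact: (ar_b Hm (subset_leq_card Hsub)).
- apply/set0Pn; move: vX; rewrite inE => /existsP[i /andP[iX _]]; by exists i.
- by apply/eqP => XLe; rewrite XLe uL in uX.
- rewrite /a' /d' !sum_sub_delta (negbTE uX) vX muX /slack; lra.
Qed.

Lemma stableP n (e : rel 'I_n) (S : {set 'I_n}) i j :
  stable_set e S -> i \in S -> j \in S -> ~~ e i j.
Proof.
by move=> /forallP/(_ i)/implyP H iS jS; move: (H iS) => /forallP/(_ j)/implyP; apply.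
Qed.

Lemma in_ext n (e : rel 'I_n) (S : {set 'I_n}) j :
  (j \in ext_nbhd e S) = (j \notin S) && [exists i in S, e i j].
Proof. by rewrite inE. Qed.

Lemma double_count (R : numDomainType) n (e : rel 'I_n) (x : 'I_n -> 'I_n -> R)
  (S : {set 'I_n}) :
  (forall i j, x i j = x j i) -> (forall i j, x i j != 0 -> e i j) -> stable_set e S ->
  \sum_(i in S) \sum_j x i j + \sum_(j in ext_nbhd e S) \sum_(k | k \notin S) x j k
  = \sum_(j in ext_nbhd e S) \sum_k x j k.
Proof.
move=> xs xe st.
have -> : \sum_(i in S) \sum_j x i j = \sum_(i in S) \sum_(j in ext_nbhd e S) x i j.
  apply: eq_bigr => i iS; rewrite [RHS]big_mkcond /=; apply: eq_bigr => j _.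
  case: ifP => // jN; apply/eqP; apply/negPn/negP => /xe eij.
  move: jN; rewrite in_ext; case jS: (j \in S).
    by have := stableP st iS jS; rewrite eij.
  by rewrite /=; move/negbT/existsPn/(_ i); rewrite iS eij.
rewrite exchange_big /= -big_split /=; apply: eq_bigr => j _.
rewrite [RHS](bigID (fun k => k \in S)) /=; congr (_ + _).
by apply: eq_bigr => i _; rewrite xs.
Qed.

Lemma far_path n (e : rel 'I_n) (S : {set 'I_n}) : symmetric e ->
  forall p k, k \notin S -> k \notin ext_nbhd e S -> path e k p -> last k p \in S ->
  exists j q, [/\ j \in ext_nbhd e S, q \notin S & e j q].
Proof.
move=> sym; elim => [|x p IH] k kS kN /=; first by rewrite (negbTE kS).
move=> /andP[ekx px] lx.
case xS: (x \in S).
  by move: kN; rewrite in_ext kS /= => /existsPn/(_ x); rewrite xS sym ekx.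
case xN: (x \in ext_nbhd e S).
  by exists x, k; split => //; rewrite sym.
exact: IH (negbT xS) (negbT xN) px lx.
Qed.

Lemma edge_out_ext n (e : rel 'I_n) (S : {set 'I_n}) : symmetric e ->
  connected_graph e -> S != set0 -> edge_outside e S ->
  exists j q, [/\ j \in ext_nbhd e S, q \notin S & e j q].
Proof.
move=> sym conn /set0Pn[s sS] /existsP[k /existsP[l /and3P[ekl kS lS]]].
case kN: (k \in ext_nbhd e S); first by exists k, l.
have /connectP[p pp sl] := conn k s.
have := @far_path n e S sym p k kS (negbT kN) pp; rewrite -sl; exact.
Qed.

Lemma forward (R : realFieldType) n (e : rel 'I_n) (c : 'I_n -> R) (rho : R)
  (x : 'I_n -> 'I_n -> R) :
  symmetric e -> connected_graph e -> 0 < rho ->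
  (forall i j, x i j = x j i) -> (forall i j, x i j != 0 -> e i j) ->
  (forall i j, 0 <= x i j) -> (forall i j, e i j -> 0 < x i j) ->
  (forall i, \sum_j x i j = rho * c i ^+ 2) ->
  (forall S : {set 'I_n}, family_S1 e S ->
      \sum_(j in S) c j ^+ 2 = \sum_(j in ext_nbhd e S) c j ^+ 2) /\
  (forall S : {set 'I_n}, family_S2 e S ->
      \sum_(j in S) c j ^+ 2 < \sum_(j in ext_nbhd e S) c j ^+ 2).
Proof.
move=> sym conn rho0 xs xe xp xpos xr.
have base : forall S, stable_set e S ->
   rho * \sum_(j in S) c j ^+ 2 + \sum_(j in ext_nbhd e S) \sum_(k | k \notin S) x j k
   = rho * \sum_(j in ext_nbhd e S) c j ^+ 2.
  move=> S st; rewrite !mulr_sumr.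
  have -> : \sum_(j in ext_nbhd e S) rho * c j ^+ 2 = \sum_(j in ext_nbhd e S) \sum_k x j k.
    by apply: eq_bigr => i _; rewrite xr.
  rewrite -(double_count xs xe st).
  by congr (_ + _); apply: eq_bigr => i _; rewrite xr.
split => S.
  move=> /and3P[S0 st eo]; apply: (mulfI (lt0r_neq0 rho0)).
  rewrite -base // [X in _ = _ + X]big1 ?addr0 // => j jN; apply: big1 => k kS.
  apply/eqP; apply/negPn/negP => /xe ejk; move/negP: eo; apply.
  apply/existsP; exists j; apply/existsP; exists k; rewrite ejk kS andbT.
  by move: jN; rewrite in_ext => /andP[].
move=> /and3P[S0 st eo].
have [j [q [jN qS ejq]]] := edge_out_ext sym conn S0 eo.
rewrite -(ltr_pM2l rho0) -base // ltrDl.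
apply: lt_le_trans (le_sum_term _ jN).
  apply: lt_le_trans (le_sum_term (P := fun k => k \notin S) _ qS); first exact: xpos.
  by move=> k _; apply: xp.
by move=> i _; apply: sumr_ge0 => k _; apply: xp.
Qed.

Lemma hall_from_stable (R : realFieldType) n (e : rel 'I_n) (b : 'I_n -> R) :
  symmetric e -> nonneg b ->
  (forall S, stable_set e S -> \sum_(i in S) b i <= \sum_(j in ext_nbhd e S) b j) ->
  hallc e setT b b.
Proof.
move=> sym bp Hst X _.
pose S := X :\: Nb e X.
have st : stable_set e S.
  apply/forallP => i; apply/implyP => iS; apply/forallP => j; apply/implyP => jS.
  apply/negP => eij; move: jS; rewrite inE => /andP[/negP H _]; apply: H.
  move: iS; rewrite inE => /andP[_ iX]; rewrite inE; apply/existsP; exists i; by rewrite iX eij.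
have Hmem : forall j, j \in ext_nbhd e S -> (j \in Nb e X) && (j \notin X).
  move=> j; rewrite in_ext => /andP[_ /existsP[i /andP[iS eij]]].
  move: iS; rewrite !inE => /andP[iN iX]; apply/andP; split.
    by apply/existsP; exists i; rewrite iX eij.
  apply/negP => jX; move/negP: iN; apply; apply/existsP; exists j; by rewrite jX sym.
have E1 : \sum_(i in X) b i = \sum_(i in S) b i + \sum_(i in X :&: Nb e X) b i.
  rewrite !(big_mkcond (fun i => i \in _)) -big_split /=; apply: eq_bigr => i _.
  rewrite in_setD in_setI; case: (i \in X); case: (i \in Nb e X) => /=; by rewrite ?addr0 ?add0r.
have E2 : \sum_(j in ext_nbhd e S) b j + \sum_(i in X :&: Nb e X) b i <=
          \sum_(j in Nb e X) b j.
  rewrite !(big_mkcond (fun i => i \in _)) -big_split /=; apply: ler_sum => j _.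
  case jE: (j \in ext_nbhd e S).
    move: (Hmem j jE) => /andP[-> /negbTE jX]; by rewrite in_setI jX /= addr0.
  rewrite add0r in_setI; case: (j \in X); case: (j \in Nb e X) => //=.
have := Hst S st; lra.
Qed.

Lemma backward (R : realFieldType) n (e : rel 'I_n) (b : 'I_n -> R) :
  symmetric e -> (forall i, 0 < b i) ->
  (forall S : {set 'I_n}, family_S1 e S ->
      \sum_(j in S) b j = \sum_(j in ext_nbhd e S) b j) ->
  (forall S : {set 'I_n}, family_S2 e S ->
      \sum_(j in S) b j < \sum_(j in ext_nbhd e S) b j) ->
  exists x : 'I_n -> 'I_n -> R,
    [/\ forall i j, x i j = x j i, forall i j, e i j -> 0 < x i j,
        forall i j, ~~ e i j -> x i j = 0 & forall i, \sum_j x i j = b i].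
Proof.
move=> sym bp HS1 HS2.
pose deg := fun i => \sum_j (if e i j then 1 else 0 : R).
pose K := \sum_i deg i.
have deg0 : forall i, 0 <= deg i by move=> i; apply: sumr_ge0 => j _; case: ifP.
have K0 : 0 <= K by apply: sumr_ge0.
have [m1 [m1p Hm1]] := pos_lb (P := predT) (fun i _ => bp i).
have [m2 [m2p Hm2]] := pos_lb (P := fun S => family_S2 e S)
   (f := fun S => \sum_(j in ext_nbhd e S) b j - \sum_(j in S) b j)
   (fun S HS => ltac:(by rewrite subr_gt0; apply: HS2)).
pose m := Num.min m1 m2.
have [mm1 mm2] : m <= m1 /\ m <= m2.
  by have := lexx m; rewrite {2}/m le_min => /andP[].
have mp : 0 < m by rewrite /m lt_min m1p m2p.
have K1 : 0 < K + 1 by lra.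
pose eps := m / (K + 1).
have epsp : 0 < eps by rewrite divr_gt0.
have epsK : eps * K <= m.
  have <- : eps * (K + 1) = m by rewrite /eps mulfVK // gt_eqF.
  by apply: ler_wpM2l; [exact: ltW|rewrite lerDl].
have degK : forall i, deg i <= K.
  by move=> i; rewrite /K (bigD1 i) //= lerDl sumr_ge0.
pose b' := fun i => b i - eps * deg i.
have b'p : nonneg b'.
  move=> i; rewrite /b' subr_ge0; have := Hm1 i isT.
  have : eps * deg i <= eps * K by apply: ler_wpM2l; [exact: ltW|exact: degK].
  lra.
have Hst' : forall S, stable_set e S -> \sum_(i in S) b' i <= \sum_(j in ext_nbhd e S) b' j.
  move=> S st; case: (eqVneq S set0) => [->|S0].
    by rewrite big_set0; apply: sumr_ge0 => j _; apply: b'p.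
  rewrite /b' !sumrB -!mulr_sumr.
  have dS : 0 <= \sum_(i in S) deg i by apply: sumr_ge0.
  case eo: (edge_outside e S).
    have F2 : family_S2 e S by rewrite /family_S2 S0 st eo.
    have := HS2 S F2; have := Hm2 S F2.
    have : \sum_(j in ext_nbhd e S) deg j <= K.
      by rewrite /K [X in _ <= X](bigID (fun j => j \in ext_nbhd e S)) /= lerDl sumr_ge0.
    move=> HK; have : eps * \sum_(j in ext_nbhd e S) deg j <= eps * K by apply: ler_wpM2l; [exact: ltW|exact: HK].
    have : 0 <= eps * \sum_(i in S) deg i by apply: mulr_ge0; [exact: ltW|exact: dS].
    lra.
  have F1 : family_S1 e S by rewrite /family_S1 S0 st eo.
  have dc : \sum_(i in S) deg i = \sum_(j in ext_nbhd e S) deg j.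
    have := @double_count R n e (fun i j => if e i j then 1 else 0) S
      (fun i j => ltac:(by rewrite /= sym)) (fun i j => ltac:(by rewrite /=; case: ifP; rewrite ?eqxx)) st.
    rewrite [X in _ + X = _]big1 ?addr0 // => j jN; apply: big1 => k kS.
    case: ifP => // ejk; move/negbT: eo => /negP; case.
    apply/existsP; exists j; apply/existsP; exists k; rewrite ejk kS andbT.
    by move: jN; rewrite in_ext => /andP[].
  by rewrite dc (HS1 S F1).
have Hh := hall_from_stable sym b'p Hst'.
have [z [zp [zs [zr zc]]]] := @hall_main R _ e _ setT b' b' (leqnn _) b'p b'p Hh.
have zr' : forall i, \sum_j z i j = b' i by move=> i; apply: zr; rewrite in_setT.
have zsupp : forall i j, z i j != 0 -> e i j by move=> i j /zs /andP[].
have zc' : forall j, \sum_i z i j = b' j.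
  have H0 : \sum_j (b' j - \sum_i z i j) = 0.
    rewrite sumrB exchange_big /=.
    rewrite [X in _ - X](eq_bigr (fun j => b' j)) ?subrr // => j _; exact: zr'.
  move=> j; apply/eqP; rewrite eq_sym -subr_eq0; apply/eqP.
  by apply: (psumr_eq0P _ H0) => // k _; rewrite subr_ge0.
have z0 : forall i j, ~~ e i j -> z i j = 0.
  by move=> i j eij; apply/eqP; apply/negPn/negP => /zsupp; apply/negP.
exists (fun i j => if e i j then eps + (z i j + z j i) / 2 else 0); split.
- by move=> i j; rewrite sym [z i j + _]addrC.
- move=> i j ->; have := zp i j; have := zp j i; lra.
- by move=> i j /negbTE ->.
move=> i.
have -> : \sum_j (if e i j then eps + (z i j + z j i) / 2 else 0) =
          \sum_j (eps * (if e i j then 1 else 0) + (z i j + z j i) / 2).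
  apply: eq_bigr => j _; case: ifP => eij; first by rewrite mulr1.
  rewrite z0 ?eij // z0; last by rewrite sym eij.
  by rewrite mulr0 addr0 mul0r addr0.
rewrite big_split /= -mulr_sumr -mulr_suml big_split /= zr' zc' /b' /deg; lra.
Qed.

Unset Implicit Arguments.
Theorem theorem1 (R : realType) (n : nat) (e : rel 'I_n)
  (Hsimple : simple_graph e) (Hconn : connected_graph e)
  (c : 'cV[R]_n) (Hc : forall i, 0 < c i ord0) (rho : R) (Hrho : 0 < rho) :
  (exists w : 'I_n -> 'I_n -> R,
      (forall i j, e i j -> w i j = w j i) /\
      (forall i j, e i j -> 0 < w i j) /\
      wadj e w *m c = rho *: c)
  <->
  ((forall S : {set 'I_n}, family_S1 e S ->
      \sum_(j in S) c j ord0 ^+ 2 = \sum_(j in ext_nbhd e S) c j ord0 ^+ 2) /\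
   (forall S : {set 'I_n}, family_S2 e S ->
      \sum_(j in S) c j ord0 ^+ 2 < \sum_(j in ext_nbhd e S) c j ord0 ^+ 2)).
Proof.
have [sym _] := Hsimple.
pose cc := fun i => c i ord0.
have cc0 : forall i, cc i != 0 by move=> i; rewrite gt_eqF // Hc.
split.
- move=> [w [ws [wp Hw]]].
  pose x := fun i j => if e i j then w i j * cc i * cc j else 0.
  have Hrow : forall i, \sum_j x i j = rho * cc i ^+ 2.
    move=> i; have := congr1 (fun M : 'M[R]_(n,1) => M i ord0) Hw; rewrite /= /wadj !mxE.
    rewrite (eq_bigr (fun j => (if e i j then w i j else 0) * c j ord0)); last first.
      by move=> j _; rewrite mxE.
    move=> H.
    have -> : \sum_j x i j = cc i * \sum_j (if e i j then w i j else 0) * c j ord0.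
      rewrite mulr_sumr; apply: eq_bigr => j _; rewrite /x; case: ifP => _ //.
        rewrite /cc; ring.
      by rewrite mul0r mulr0.
    rewrite H /cc; ring.
  apply: (@forward R n e cc rho x sym Hconn Hrho).
  + move=> i j; rewrite /x; case eij: (e i j); rewrite sym eij //.
    rewrite (ws _ _ eij); ring.
  + by move=> i j; rewrite /x; case: ifP => // _; rewrite eqxx.
  + move=> i j; rewrite /x; case: ifP => // eij.
    by rewrite mulr_ge0 ?mulr_ge0 ?ltW ?wp ?Hc.
  + by move=> i j eij; rewrite /x eij !mulr_gt0 ?wp ?Hc.
  + exact: Hrow.
- move=> [H1 H2].
  have [x [xs xpos x0 xr]] := @backward R n e (fun i => cc i ^+ 2) sym
      (fun i => exprn_gt0 2 (Hc i)) H1 H2.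
  exists (fun i j => rho * x i j / (cc i * cc j)); split; [|split].
  + by move=> i j _; rewrite xs [cc i * _]mulrC.
  + by move=> i j eij; rewrite divr_gt0 ?mulr_gt0 ?xpos ?Hc.
  + apply/matrixP => i k; rewrite (ord1 k) /wadj !mxE.
    under eq_bigr => j _ do rewrite mxE.
    have -> : \sum_j (if e i j then rho * x i j / (cc i * cc j) else 0) * c j ord0
              = \sum_j rho / cc i * x i j.
      apply: eq_bigr => j _; case: ifP => eij.
        by rewrite /cc; field; rewrite -/(cc i) -/(cc j) cc0 cc0.
      by rewrite x0 ?eij // mul0r mulr0.
    rewrite -mulr_sumr xr /cc; field.
    by rewrite -/(cc i) cc0.
Qed.
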